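(* $\mathsf{N}=\mathsf{MS4}+\Box\exists p\to\neg\Box\forall\neg\Box p=\mathsf{MS4}+\Box\forall\Diamond p\to\Diamond\forall p$, where $\mathsf{N}=\mathsf{MS4}+\Box\exists p\to\Diamond\exists\Box p$.
   Context: $\mathsf{MS4}$ is the smallest set of formulas in the classical bimodal language $\mathcal{L}_{\Box\forall}$ containing all classical tautologies, the $\mathsf{S4}$ axioms for $\Box$, the $\mathsf{S5}$ axioms for $\forall$, and $\Box\forall p\to\forall\Box p$, closed under modus ponens, substitution, $\Box$-necessitation and $\forall$-necessitation; $\Diamond=\neg\Box\neg$, $\exists=\neg\forall\neg$. For a formula $\chi$, $\mathsf{MS4}+\chi$ is the smallest set containing $\mathsf{MS4}$ and $\chi$ closed under these rules. *)

(* Defs.v *)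
From Stdlib Require Import Bool.

Inductive form : Type :=
| Var : nat -> form
| Bot : form
| Imp : form -> form -> form
| Box : form -> form
| All : form -> form.

Definition Neg (a : form) : form := Imp a Bot.
Definition Dia (a : form) : form := Neg (Box (Neg a)).
Definition Ex  (a : form) : form := Neg (All (Neg a)).

Fixpoint beval (v : form -> bool) (f : form) : bool :=
  match f with
  | Var n => v (Var n)
  | Bot => false
  | Imp a b => implb (beval v a) (beval v b)
  | Box a => v (Box a)
  | All a => v (All a)
  end.

(* classical tautologies of the bimodal language (substitution instances of
   propositional tautologies) *)
Definition tautology (f : form) : Prop := forall v : form -> bool, beval v f = true.

Fixpoint subst (s : nat -> form) (f : form) : form :=
  match f with
  | Var n => s n
  | Bot => Bot
  | Imp a b => Imp (subst s a) (subst s b)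
  | Box a => Box (subst s a)
  | All a => All (subst s a)
  end.

Definition p : form := Var 0.
Definition q : form := Var 1.

Inductive MS4_axiom : form -> Prop :=
| ax_K_box  : MS4_axiom (Imp (Box (Imp p q)) (Imp (Box p) (Box q)))
| ax_T_box  : MS4_axiom (Imp (Box p) p)
| ax_4_box  : MS4_axiom (Imp (Box p) (Box (Box p)))
| ax_K_all  : MS4_axiom (Imp (All (Imp p q)) (Imp (All p) (All q)))
| ax_T_all  : MS4_axiom (Imp (All p) p)
| ax_5_all  : MS4_axiom (Imp (Ex p) (All (Ex p)))
| ax_lc     : MS4_axiom (Imp (Box (All p)) (All (Box p))).

Inductive MS4plus (chi : form) : form -> Prop :=
| d_taut : forall f, tautology f -> MS4plus chi f
| d_ax : forall f, MS4_axiom f -> MS4plus chi f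
| d_chi : MS4plus chi chi
| d_mp : forall a b, MS4plus chi (Imp a b) -> MS4plus chi a -> MS4plus chi b
| d_subst : forall (s : nat -> form) f, MS4plus chi f -> MS4plus chi (subst s f)
| d_nec_box : forall f, MS4plus chi f -> MS4plus chi (Box f)
| d_nec_all : forall f, MS4plus chi f -> MS4plus chi (All f).

Definition chi_N : form := Imp (Box (Ex p)) (Dia (Ex (Box p))).
Definition chi_1 : form := Imp (Box (Ex p)) (Neg (Box (All (Neg (Box p))))).
Definition chi_2 : form := Imp (Box (All (Dia p))) (Dia (All p)).

(* Main.v *)
Require Import Defs.
From Stdlib Require Import Bool.

Ltac taut_tac :=
  let v := fresh "v" in
  intro v; repeat match goal with H := _ |- _ => subst H end;
  cbv [beval Neg Dia Ex p q chi_N chi_1 chi_2];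
  repeat match goal with
         | |- context [beval v ?x] => destruct (beval v x)
         | |- context [v ?x] => destruct (v x)
         end; reflexivity.

Section D.
Variable chi : form.
Local Notation D := (MS4plus chi).

Lemma tmp1 a b : tautology (Imp a b) -> D a -> D b.
Proof. intros T H. eapply d_mp; [apply d_taut; exact T| exact H]. Qed.

Lemma tmp2 a b c : tautology (Imp a (Imp b c)) -> D a -> D b -> D c.
Proof. intros T H1 H2. eapply d_mp; [eapply d_mp; [apply d_taut; exact T| exact H1]| exact H2]. Qed.

Lemma tmp3 a b c d : tautology (Imp a (Imp b (Imp c d))) -> D a -> D b -> D c -> D d.
Proof. intros T H1 H2 H3. eapply d_mp; [eapply tmp2; [exact T| exact H1| exact H2]| exact H3]. Qed.

Lemma Kbox a b : D (Imp (Box (Imp a b)) (Imp (Box a) (Box b))).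
Proof.
  pose proof (d_subst chi (fun n => match n with 0 => a | _ => b end) _ (d_ax _ _ ax_K_box)) as H.
  exact H.
Qed.

Lemma Kall a b : D (Imp (All (Imp a b)) (Imp (All a) (All b))).
Proof.
  pose proof (d_subst chi (fun n => match n with 0 => a | _ => b end) _ (d_ax _ _ ax_K_all)) as H.
  exact H.
Qed.

Lemma box_mono a b : D (Imp a b) -> D (Imp (Box a) (Box b)).
Proof. intro H. eapply d_mp; [apply Kbox| apply d_nec_box; exact H]. Qed.

Lemma all_mono a b : D (Imp a b) -> D (Imp (All a) (All b)).
Proof. intro H. eapply d_mp; [apply Kall| apply d_nec_all; exact H]. Qed.

End D.

Lemma incl c1 c2 : MS4plus c2 c1 -> forall f, MS4plus c1 f -> MS4plus c2 f.
Proof.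
  intros Hc f Hf; induction Hf.
  - now apply d_taut.
  - now apply d_ax.
  - exact Hc.
  - eapply d_mp; eauto.
  - now apply d_subst.
  - now apply d_nec_box.
  - now apply d_nec_all.
Qed.

Lemma one_in_N : MS4plus chi_N chi_1.
Proof.
  pose (Y := All (Neg (Box p))).
  assert (H : MS4plus chi_N (Imp (Box Y) (Box (Neg (Neg Y))))).
  { apply box_mono, d_taut; taut_tac. }
  eapply tmp2; [| exact (d_chi chi_N) | exact H].
  unfold chi_N, chi_1; unfold Y; taut_tac.
Qed.

Lemma N_in_one : MS4plus chi_1 chi_N.
Proof.
  pose (Y := All (Neg (Box p))).
  assert (H : MS4plus chi_1 (Imp (Box (Neg (Neg Y))) (Box Y))).
  { apply box_mono, d_taut; taut_tac. }
  eapply tmp2; [| exact (d_chi chi_1) | exact H].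
  unfold chi_N, chi_1; unfold Y; taut_tac.
Qed.

Definition sneg : nat -> form := fun n => match n with 0 => Neg p | k => Var k end.

Lemma two_in_N : MS4plus chi_N chi_2.
Proof.
  pose proof (d_subst chi_N sneg _ (d_chi chi_N)) as I. cbn in I.
  pose (Z := All (Neg (Box (Neg p)))).
  assert (H1 : MS4plus chi_N (Imp (Box Z) (Box (Neg (Neg Z))))).
  { apply box_mono, d_taut; taut_tac. }
  assert (H2 : MS4plus chi_N (Imp (Box (Neg (All p))) (Box (Neg (All (Neg (Neg p))))))).
  { apply box_mono. apply (tmp1 _ (Imp (All (Neg (Neg p))) (All p))); [taut_tac|].
    apply all_mono, d_taut; taut_tac. }
  eapply tmp3; [| exact I | exact H1 | exact H2].
  unfold chi_2; unfold Z in *; cbn in I; taut_tac.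
Qed.

Lemma N_in_two : MS4plus chi_2 chi_N.
Proof.
  pose proof (d_subst chi_2 sneg _ (d_chi chi_2)) as I. cbn in I.
  assert (H1 : MS4plus chi_2 (Imp (Box (Neg (Neg (All (Neg (Box p))))))
                                  (Box (All (Neg (Box (Neg (Neg p)))))))).
  { apply box_mono. apply (tmp1 _ (Imp (All (Neg (Box p))) (All (Neg (Box (Neg (Neg p))))))); [taut_tac|].
    apply all_mono. apply (tmp1 _ (Imp (Box (Neg (Neg p))) (Box p))); [taut_tac|].
    apply box_mono, d_taut; taut_tac. }
  eapply tmp2; [| exact I | exact H1].
  unfold chi_N; taut_tac.
Qed.

Theorem lemma5p9 :
  (forall f : form, MS4plus chi_N f <-> MS4plus chi_1 f) /\
  (forall f : form, MS4plus chi_N f <-> MS4plus chi_2 f).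
Proof.
  split; intro f; split; apply incl.
  - exact N_in_one.
  - exact one_in_N.
  - exact N_in_two.
  - exact two_in_N.
Qed.
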